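(* Let $i\in\arg\max_x w^{\text{avg}}_x$. There exists $\rho_0>0$ such that for every $\rho\in(0,\rho_0]$, $$\Delta=\mathcal{W}(D_{\text{mask}})-\mathcal{W}(D_{\text{fair}})\ \ge\ \rho\cdot\max\Big(0,\ \max_{j\ne i,\ p\in\{0,1\}}\big\{R_p(j)-w^{\text{avg}}_i\big\}\Big),$$ where $R_p(j)=\dfrac{w_{i,\bar p}+w_{j,p}}{\Pr(P=\bar p\mid x_i)+\Pr(P=p\mid x_j)}$ with $\bar p=1-p$. (In particular, for such $\rho$ the optimal fair value is $\mathcal{W}(D_{\text{fair}})=\rho\, w^{\text{avg}}_i$.)
   Context: Fix an integer $k\ge 2$, $X\in\{1,\dots,k\}$, $P\in\{0,1\}$, $\pi_{x,p}=\Pr(X=x,P=p)>0$ with $\sum_{x,p}\pi_{x,p}=1$, $\Pr(X=x)=\pi_{x,0}+\pi_{x,1}$, $\Pr(P=p\mid x)=\pi_{x,p}/\Pr(X=x)$; write $x_i$ for the event $X=i$. Rewards $\gamma_{x,p}\in[0,1]$. Define $w_{x,p}=\gamma_{x,p}\Pr(P=p\mid x)$ and $w^{\text{avg}}_x=w_{x,0}+w_{x,1}$. Policies are $\alpha\in[0,1]^{2k}$ with objective $\mathcal{W}(\alpha)=\sum_{x,p}\gamma_{x,p}\alpha_{x,p}\pi_{x,p}$ and participation constraint $\sum_{x,p}\alpha_{x,p}\pi_{x,p}=\rho$. $\mathcal{W}(D_{\text{fair}})$ is the optimal value of maximizing $\mathcal{W}$ over $\alpha\in[0,1]^{2k}$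 subject to the participation constraint and $\alpha_{x,1}=\alpha_{x,0}$ for all $x$. $\mathcal{W}(D_{\text{mask}})$ is the optimal value of maximizing $\mathcal{W}$ over $\alpha\in[0,1]^{2k}$ subject to the participation constraint and the zero-ATE (masking) constraint $\sum_{x=1}^k\Pr(X=x)(\alpha_{x,1}-\alpha_{x,0})=0$. *)

(* Defs.v *)
From HB Require Import structures.
From mathcomp Require Import all_boot all_order all_algebra.
From mathcomp Require Import classical_sets reals.
Set Implicit Arguments. Unset Strict Implicit. Unset Printing Implicit Defensive.
Import Order.TTheory GRing.Theory Num.Theory.
Local Open Scope ring_scope.
Local Open Scope classical_set_scope.

Section Defs.
Variables (R : realType) (k : nat).
(* X ranges over 'I_k (values 1..k relabelled 0..k-1), P over bool (false = 0, true = 1). *)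
Variables (pi g : 'I_k -> bool -> R).

Definition PrX (x : 'I_k) : R := pi x false + pi x true.
Definition condP (x : 'I_k) (p : bool) : R := pi x p / PrX x.
Definition w (x : 'I_k) (p : bool) : R := g x p * condP x p.
Definition wavg (x : 'I_k) : R := w x false + w x true.

Definition Wobj (a : 'I_k -> bool -> R) : R :=
  \sum_(x < k) \sum_(p : bool) g x p * a x p * pi x p.
Definition participation (a : 'I_k -> bool -> R) : R :=
  \sum_(x < k) \sum_(p : bool) a x p * pi x p.

Definition feasible (rho : R) (a : 'I_k -> bool -> R) : Prop :=
  (forall x p, 0 <= a x p <= 1) /\ participation a = rho.

Definition fair_set (rho : R) : set ('I_k -> bool -> R) :=
  [set a | feasible rho a /\ forall x, a x true = a x false].

Definition mask_set (rho : R) : set ('I_k -> bool -> R) :=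
  [set a | feasible rho a /\ \sum_(x < k) PrX x * (a x true - a x false) = 0].

(* optimal values (suprema; they are attained maxima for feasible rho) *)
Definition W_fair (rho : R) : R := sup [set Wobj a | a in fair_set rho].
Definition W_mask (rho : R) : R := sup [set Wobj a | a in mask_set rho].

Definition Rp (i j : 'I_k) (p : bool) : R :=
  (w i (~~ p) + w j p) / (condP i (~~ p) + condP j p).
End Defs.

(* Main.v *)
Require Import Defs.
From HB Require Import structures.
From mathcomp Require Import all_boot all_order all_algebra.
From mathcomp Require Import classical_sets reals.
From mathcomp Require Import ring lra.
Import Order.TTheory GRing.Theory Num.Theory.
Local Open Scope ring_scope.
Local Open Scope classical_set_scope.
Set Implicit Arguments. Unset Strict Implicit.

Section H.
Variables (R : realType) (k : nat) (pi g : 'I_k -> bool -> R).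
Hypothesis pipos : forall x p, 0 < pi x p.
Hypothesis pisum : \sum_(x < k) \sum_(p : bool) pi x p = 1.
Hypothesis g01 : forall x p, 0 <= g x p <= 1.

Lemma PrX_gt0 x : 0 < PrX pi x.
Proof. rewrite /PrX; have := pipos x false; have := pipos x true; lra. Qed.

Lemma PrX_le1 x : PrX pi x <= 1.
Proof.
rewrite -pisum (bigD1 x) //= /PrX big_bool /= [pi x true + _]addrC lerDl.
apply: sumr_ge0 => y _; rewrite big_bool /=; have := pipos y false; have := pipos y true; lra.
Qed.

Lemma PrX_wavg x : PrX pi x * wavg pi g x = g x false * pi x false + g x true * pi x true.
Proof.
have h := PrX_gt0 x. rewrite /wavg /w /condP. field. by rewrite gt_eqF.
Qed.

Lemma Wobj_le1 a : (forall x p, 0 <= a x p <= 1) -> Wobj pi g a <= 1.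
Proof.
move=> ha; rewrite -pisum; apply: ler_sum => x _; apply: ler_sum => p _.
have [a0 a1] := andP (ha x p); have [g0 g1] := andP (g01 x p).
apply: ler_piMl; [exact: ltW | exact: mulr_ile1].
Qed.

Lemma has_ub_img (S : set ('I_k -> bool -> R)) rho :
  S `<=` feasible pi rho -> has_ubound [set Wobj pi g a | a in S].
Proof.
move=> hS; exists 1 => y [a /hS [ha _] <-]; exact: Wobj_le1.
Qed.

Lemma sum_delta (i : 'I_k) (G : 'I_k -> R) : \sum_(x < k) (x == i)%:R * G x = G i.
Proof.
rewrite (bigD1 i) //= eqxx mul1r big1 ?addr0 // => x /negbTE ->; by rewrite mul0r.
Qed.

Lemma sum_delta2 (i j : 'I_k) (A B : R) (G : 'I_k -> R) :
  \sum_(x < k) ((x == i)%:R * A + (x == j)%:R * B) * G x = A * G i + B * G j.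
Proof.
rewrite -(sum_delta i (fun x => A * G x)) -(sum_delta j (fun x => B * G x)) -big_split /=.
by apply: eq_bigr => x _; ring.
Qed.

Lemma sum2_delta (i j : 'I_k) (H1 H2 : bool -> R) (F : 'I_k -> bool -> R) :
  \sum_(x < k) \sum_(q : bool) ((x == i)%:R * H1 q + (x == j)%:R * H2 q) * F x q =
  \sum_(q : bool) H1 q * F i q + \sum_(q : bool) H2 q * F j q.
Proof.
rewrite [\sum_q H1 q * _]big_bool [\sum_q H2 q * _]big_bool /=.
rewrite -(sum_delta i (fun x => H1 true * F x true + H1 false * F x false)).
rewrite -(sum_delta j (fun x => H2 true * F x true + H2 false * F x false)) -big_split /=.
by apply: eq_bigr => x _; rewrite big_bool /=; ring.
Qed.


Lemma Wobj_delta (i j : 'I_k) (H1 H2 : bool -> R) :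
  Wobj pi g (fun x q => (x == i)%:R * H1 q + (x == j)%:R * H2 q) =
  \sum_(q : bool) H1 q * (g i q * pi i q) + \sum_(q : bool) H2 q * (g j q * pi j q).
Proof.
rewrite /Wobj -(sum2_delta i j H1 H2 (fun x q => g x q * pi x q)).
by apply: eq_bigr => x _; apply: eq_bigr => q _; ring.
Qed.

Lemma part_delta (i j : 'I_k) (H1 H2 : bool -> R) :
  participation pi (fun x q => (x == i)%:R * H1 q + (x == j)%:R * H2 q) =
  \sum_(q : bool) H1 q * pi i q + \sum_(q : bool) H2 q * pi j q.
Proof.
rewrite /participation -(sum2_delta i j H1 H2 pi).
by apply: eq_bigr => x _; apply: eq_bigr => q _; ring.
Qed.

Lemma mask_delta (i j : 'I_k) (H1 H2 : bool -> R) :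
  \sum_(x < k) PrX pi x * ((fun x q => (x == i)%:R * H1 q + (x == j)%:R * H2 q) x true
      - (fun x q => (x == i)%:R * H1 q + (x == j)%:R * H2 q) x false) =
  (H1 true - H1 false) * PrX pi i + (H2 true - H2 false) * PrX pi j.
Proof.
rewrite -(sum_delta2 i j (H1 true - H1 false) (H2 true - H2 false) (PrX pi)).
by apply: eq_bigr => x _ /=; ring.
Qed.

Lemma sum_if (r : bool) (A : R) (F : bool -> R) :
  \sum_(q : bool) (if q == r then A else 0) * F q = A * F r.
Proof. by rewrite big_bool; case: r => /=; ring. Qed.

Lemma fair_ub (i : 'I_k) rho a : (forall x, wavg pi g x <= wavg pi g i) ->
  fair_set pi rho a -> Wobj pi g a <= rho * wavg pi g i.
Proof.
move=> hmax [[ha hp] hs]; rewrite -hp /participation mulr_suml.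
apply: ler_sum => x _; rewrite mulr_suml !big_bool /= hs.
have e1 : g x true * a x false * pi x true + g x false * a x false * pi x false
   = a x false * (PrX pi x * wavg pi g x) by rewrite PrX_wavg; ring.
have e2 : a x false * pi x true * wavg pi g i + a x false * pi x false * wavg pi g i
   = a x false * (PrX pi x * wavg pi g i) by rewrite /PrX; ring.
rewrite e1 e2; apply: ler_wpM2l; first by have /andP[] := ha x false.
by apply: ler_wpM2l; [exact: ltW (PrX_gt0 x) | exact: hmax].
Qed.


Definition mm := \big[Num.min/1]_(x < k) \big[Num.min/1]_(q : bool) pi x q.

Lemma mm_gt0 : 0 < mm.
Proof.
rewrite /mm; elim/big_ind: _ => //; first by move=> u v hu hv; rewrite lt_min hu hv.
move=> x _; elim/big_ind: _ => //; first by move=> u v hu hv; rewrite lt_min hu hv.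
Qed.

Lemma mm_le x q : mm <= pi x q.
Proof.
rewrite /mm (bigD1 x) //= ge_min; apply/orP; left.
by rewrite (bigD1 q) //= ge_min lexx.
Qed.

Lemma pi_le_PrX x q : pi x q <= PrX pi x.
Proof.
rewrite /PrX; have := pipos x false; have := pipos x true; case: q; lra.
Qed.

Lemma mm_le_PrX x : mm <= PrX pi x.
Proof. exact: le_trans (mm_le x false) (pi_le_PrX x false). Qed.

Lemma mm_le1 (x : 'I_k) : mm <= 1.
Proof. exact: le_trans (mm_le_PrX x) (PrX_le1 x). Qed.


Lemma fair_wit (i : 'I_k) rho : 0 < rho <= PrX pi i ->
  let a0 := fun x q => (x == i)%:R * (fun _ : bool => rho / PrX pi i) q
                       + (x == i)%:R * (fun _ : bool => 0) q in
  feasible pi rho a0 /\ (forall x, a0 x true = a0 x false) /\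
  \sum_(x < k) PrX pi x * (a0 x true - a0 x false) = 0 /\
  Wobj pi g a0 = rho * wavg pi g i.
Proof.
move=> /andP[r0 r1] a0; have hP := PrX_gt0 i.
have c01 : 0 <= rho / PrX pi i <= 1.
  apply/andP; split; first by apply: divr_ge0; exact: ltW.
  by rewrite ler_pdivrMr // mul1r.
split; [split|split; [by []|split]].
- move=> x p; rewrite /a0 /=; case: (x == i) => /=; rewrite ?mul1r ?mul0r ?addr0 ?lexx ?ler01 //.
- rewrite (part_delta i i (fun _ => rho / PrX pi i) (fun _ => 0) : participation pi a0 = _) !big_bool /= /PrX; field; rewrite gt_eqF //.
- by rewrite big1 // => x _; rewrite /a0 /= subrr mulr0.
- rewrite (Wobj_delta i i (fun _ => rho / PrX pi i) (fun _ => 0) : Wobj pi g a0 = _) !big_bool /wavg /w /condP /=; field; rewrite gt_eqF //.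
Qed.


Lemma condP_ge x q : pi x q <= condP pi x q.
Proof.
rewrite /condP ler_pdivlMr ?PrX_gt0 //; apply: ler_piMr; [exact: ltW | exact: PrX_le1].
Qed.

Lemma mask_wit (i j : 'I_k) (p : bool) rho : j != i -> 0 < rho <= mm * mm ->
  exists a, mask_set pi rho a /\ Wobj pi g a = rho * Rp pi g i j p.
Proof.
move=> hji /andP[r0 r1].
set c := condP pi i (~~ p) + condP pi j p.
have hPi := PrX_gt0 i; have hPj := PrX_gt0 j.
have hm := mm_gt0.
have cm : mm <= c.
  rewrite /c; apply: le_trans (mm_le j p) _; apply: le_trans (condP_ge j p) _.
  rewrite lerDr /condP; apply: divr_ge0; [exact: ltW | exact: ltW].
have c0 : 0 < c by exact: lt_le_trans hm cm.
set t := rho / c.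
have t0 : 0 <= t by apply: divr_ge0; exact: ltW.
have tm : t <= mm.
  rewrite /t ler_pdivrMr //; apply: le_trans r1 _; by apply: ler_wpM2l; [exact: ltW|].
have A01 : 0 <= t / PrX pi i <= 1.
  apply/andP; split; first by apply: divr_ge0 => //; exact: ltW.
  by rewrite ler_pdivrMr // mul1r; apply: le_trans tm (mm_le_PrX i).
have B01 : 0 <= t / PrX pi j <= 1.
  apply/andP; split; first by apply: divr_ge0 => //; exact: ltW.
  by rewrite ler_pdivrMr // mul1r; apply: le_trans tm (mm_le_PrX j).
pose H1 := fun q : bool => if q == ~~ p then t / PrX pi i else 0.
pose H2 := fun q : bool => if q == p then t / PrX pi j else 0.
have H101 q : 0 <= H1 q <= 1 by rewrite /H1; case: ifP; rewrite ?lexx ?ler01.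
have H201 q : 0 <= H2 q <= 1 by rewrite /H2; case: ifP; rewrite ?lexx ?ler01.
pose a := fun x q => (x == i)%:R * H1 q + (x == j)%:R * H2 q.
exists a; split; [split; [split|] |].
- move=> x q; rewrite /a; case: (eqVneq x i) => [->|hxi].
    by rewrite eq_sym (negbTE hji) mul1r mul0r addr0.
  rewrite mul0r add0r; case: (x == j); rewrite ?mul1r ?mul0r ?lexx ?ler01 //.
- rewrite (part_delta i j H1 H2 : participation pi a = _) /H1 /H2 !sum_if.
  have -> : t / PrX pi i * pi i (~~p) + t / PrX pi j * pi j p = t * c by rewrite /c /condP; ring.
  by rewrite /t divfK ?gt_eqF.
- rewrite (mask_delta i j H1 H2 : \sum_(x < k) PrX pi x * (a x true - a x false) = _) /H1 /H2; case: (p) => /=;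
  rewrite ?subr0 ?sub0r; field; rewrite ?gt_eqF //.
- rewrite (Wobj_delta i j H1 H2 : Wobj pi g a = _) /H1 /H2 !sum_if.
  have -> : t / PrX pi i * (g i (~~p) * pi i (~~p)) + t / PrX pi j * (g j p * pi j p)
     = t * (w pi g i (~~p) + w pi g j p) by rewrite /w /condP; ring.
  rewrite /t /Rp -/c; ring.
Qed.

End H.

Theorem mainTheorem3 (R : realType) (k : nat) (pi g : 'I_k -> bool -> R) (i : 'I_k) :
  (2 <= k)%N ->
  (forall x p, 0 < pi x p) ->
  \sum_(x < k) \sum_(p : bool) pi x p = 1 ->
  (forall x p, 0 <= g x p <= 1) ->
  (forall x, wavg pi g x <= wavg pi g i) ->
  exists rho0 : R, 0 < rho0 /\
    forall rho : R, 0 < rho <= rho0 ->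
      W_fair pi g rho = rho * wavg pi g i /\
      rho * \big[Num.max/0]_(j < k | j != i) \big[Num.max/0]_(p : bool)
              (Rp pi g i j p - wavg pi g i)
        <= W_mask pi g rho - W_fair pi g rho.
Proof.
move=> hk hpos hsum hg hmax.
have m0 := mm_gt0 hpos.
exists (mm pi * mm pi); split; first exact: mulr_gt0.
move=> rho /andP[r0 r1].
have rm : rho <= mm pi.
  apply: le_trans r1 _; apply: ler_piMl; [exact: ltW | exact: mm_le1 hpos hsum i].
have rP : rho <= PrX pi i := le_trans rm (mm_le_PrX hpos i).
have hr : 0 < rho <= PrX pi i by rewrite r0 rP.
have [hfeas [hfair [hmask hW]]] := fair_wit g hpos hr.
set a0 := (X in feasible pi rho X) in hfeas hfair hmask hW.
have hWF : W_fair pi g rho = rho * wavg pi g i.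
  apply/eqP; rewrite eq_le; apply/andP; split.
    apply: ge_sup; first by exists (Wobj pi g a0); exists a0.
    by move=> y [a ha <-]; exact: fair_ub hpos _ _ _ hmax ha.
  rewrite -hW; apply: (ub_le_sup (has_ub_img hpos hsum hg (rho := rho) _)).
    by move=> a [].
  by exists a0.
have hWm a : mask_set pi rho a -> Wobj pi g a <= W_mask pi g rho.
  move=> ha; apply: (ub_le_sup (has_ub_img hpos hsum hg (rho := rho) _)).
    by move=> b [].
  by exists a.
have D0 : rho * wavg pi g i <= W_mask pi g rho by rewrite -hW; apply: hWm.
split=> //; rewrite hWF.
set D := W_mask pi g rho - rho * wavg pi g i.
have PD0 : rho * 0 <= D by rewrite mulr0 subr_ge0.
have Pmax u v : rho * u <= D -> rho * v <= D -> rho * Num.max u v <= D.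
  by move=> hu hv; rewrite maxEle; case: ifP.
elim/big_ind: _; [exact: PD0|exact: Pmax|move=> j hji].
elim/big_ind: _; [exact: PD0|exact: Pmax|move=> p _].
have hr2 : 0 < rho <= mm pi * mm pi by rewrite r0 r1.
have [a [ha hWa]] := mask_wit g hpos hsum p hji hr2.
rewrite /D mulrBr lerD2r -hWa; exact: hWm.
Qed.
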